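(* Let $K:=F'_x+p\,F'_y$. For every polynomial $r(x,y,p)=\sum_{j} r_j(x,y)p^j$ in $p$ with coefficients holomorphic on $U$, the following equality of holomorphic $2$-forms holds on the surface $S$ (i.e. after restriction to $S$): $$d\Bigl(\frac{r(x,y,p)}{F'_p(x,y,p)}(dy-p\,dx)\Bigr)=\Bigl((r'_x+p\,r'_y)-\Bigl(\frac{K}{F'_p}\Bigr)'_p\, r-\frac{K}{F'_p}\,r'_p\Bigr)\frac{dx\wedge dy}{F'_p}.$$
   Context: Let $d\ge 3$, let $U\subset\mathbb{C}^2$ be open with coordinates $(x,y)$, and let $F(x,y,p)=\sum_{i=0}^d a_i(x,y)p^{d-i}$ with $a_i$ holomorphic on $U$ and $a_0\equiv 1$, such that for every $(x,y)\in U$ the $d$ roots in $p$ of $F(x,y,p)$ are pairwise distinct (so $F$ and $F'_p$ have no common zero). Let $S\subset U\times\mathbb{C}$ be the surface $\{F(x,y,p)=0\}$ (on which $F'_p\neq 0$). Subscripts $'_x,'_y,'_p$ denote partial derivatives with respect to $x,y,p$. *)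

(* Defs.v *)
(* The complex plane is  R[i]^o  for  R : realType
   (complex numbers of mathcomp-real-closed, viewed as a normed module over
   themselves), so that [differentiable] on C*C means complex (Frechet)
   differentiability, i.e. holomorphy, and [derive1] is the complex derivative. *)
From HB Require Import structures.
From mathcomp Require Import all_boot all_order all_algebra.
From mathcomp Require Import all_classical all_reals all_analysis.
From mathcomp Require Import complex.
Set Implicit Arguments. Unset Strict Implicit. Unset Printing Implicit Defensive.
Import Order.TTheory GRing.Theory Num.Theory.
Import numFieldNormedType.Exports.
Local Open Scope ring_scope.
Local Open Scope classical_set_scope.

Notation CC R := ((R[i])^o).

Section Defs.
Variable R : realType.
Local Notation C := (CC R).

Definition holomorphic_on (U : set (C * C)) (f : C -> C -> C) : Prop :=
  forall z, U z -> differentiable (fun w : C * C => f w.1 w.2) z.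

Definition pdx3 (f : C -> C -> C -> C) (x y p : C) : C :=
  derive1 (fun t : C => f t y p) x.
Definition pdy3 (f : C -> C -> C -> C) (x y p : C) : C :=
  derive1 (fun t : C => f x t p) y.
Definition pdp3 (f : C -> C -> C -> C) (x y p : C) : C :=
  derive1 (fun t : C => f x y t) p.

Definition pdx2 (g : C -> C -> C) (x y : C) : C := derive1 (fun t : C => g t y) x.
Definition pdy2 (g : C -> C -> C) (x y : C) : C := derive1 (fun t : C => g x t) y.

Definition polyF (d : nat) (a : nat -> C -> C -> C) (x y p : C) : C :=
  \sum_(i < d.+1) a i x y * p ^+ (d - i).

Definition polyr (n : nat) (rc : nat -> C -> C -> C) (x y p : C) : C :=
  \sum_(j < n) rc j x y * p ^+ j.

Definition Kfun (F : C -> C -> C -> C) (x y p : C) : C :=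
  pdx3 F x y p + p * pdy3 F x y p.

Definition KoverFp (F : C -> C -> C -> C) (x y p : C) : C :=
  Kfun F x y p / pdp3 F x y p.

(* Differential forms on S are handled through the local charts of S given by
   graphs  (x,y) |-> (x,y,phi(x,y))  (S is covered by such charts since
   F'_p <> 0 on S).  A 1-form  P dx + Q dy (+ 0 dp) in the ambient space
   pulls back along the graph of phi to  P(x,y,phi) dx + Q(x,y,phi) dy.
   [dcoef P Q] is the coefficient of dx/\dy in d(P dx + Q dy). *)
Definition restr (phi : C -> C -> C) (f : C -> C -> C -> C) (x y : C) : C :=
  f x y (phi x y).

Definition dcoef (P Q : C -> C -> C) (x y : C) : C :=
  pdx2 Q x y - pdy2 P x y.

(* the 1-form  (r/F'_p)(dy - p dx) = P dx + Q dy  with *)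
Definition omegaP (F r : C -> C -> C -> C) (x y p : C) : C :=
  - (r x y p / pdp3 F x y p) * p.
Definition omegaQ (F r : C -> C -> C -> C) (x y p : C) : C :=
  r x y p / pdp3 F x y p.

Definition rhs_coef (F r : C -> C -> C -> C) (x y p : C) : C :=
  ((pdx3 r x y p + p * pdy3 r x y p)
   - pdp3 (KoverFp F) x y p * r x y p
   - KoverFp F x y p * pdp3 r x y p) / pdp3 F x y p.

End Defs.

(* Main.v *)
Require Import Defs.
From HB Require Import structures.
From mathcomp Require Import all_boot all_order all_algebra.
From mathcomp Require Import all_classical all_reals all_analysis.
From mathcomp Require Import complex.
From mathcomp Require Import ring.
Import Order.TTheory GRing.Theory Num.Theory.
Import numFieldNormedType.Exports.
Local Open Scope ring_scope.
Local Open Scope classical_set_scope.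

Section S.
Context {R : realType}.
Local Notation C := (CC R).

Lemma is_deriveV' {f : C -> C} {x v df : C} : f x != 0 -> is_derive x v f df ->
  is_derive x v (fun y => (f y)^-1) (- (f x) ^- 2 * df).
Proof.
move=> fx [d1 d2]; apply: DeriveDef; first exact: derivableV.
by rewrite deriveV // d2.
Qed.

Lemma hol_dx (U : set (C * C)) h x y : holomorphic_on U h -> U (x, y) ->
  is_derive x 1 (fun t => h t y) (pdx2 h x y).
Proof.
move=> hh Uxy.
have dc : differentiable ((fun w : C * C => h w.1 w.2) \o (fun t : C => (t, y))) x.
  apply: differentiable_comp; last exact: hh.
  apply: differentiable_pair => //.
have := @diff_derivable _ _ _ _ _ (1 : C) dc => /derivableP.
by rewrite /pdx2 derive1E.
Qed.

Lemma hol_dy (U : set (C * C)) h x y : holomorphic_on U h -> U (x, y) ->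
  is_derive y 1 (fun t => h x t) (pdy2 h x y).
Proof.
move=> hh Uxy.
have dc : differentiable ((fun w : C * C => h w.1 w.2) \o (fun t : C => (x, t))) y.
  apply: differentiable_comp; last exact: hh.
  apply: differentiable_pair => //.
have := @diff_derivable _ _ _ _ _ (1 : C) dc => /derivableP.
by rewrite /pdy2 derive1E.
Qed.
Lemma der_sumpow m (c : nat -> C -> C) (dc : nat -> C) (e : nat -> nat)
  (B : C -> C) (db t0 : C) :
  (forall i, (i < m)%N -> is_derive t0 1 (c i) (dc i)) -> is_derive t0 1 B db ->
  is_derive t0 1 (fun t => \sum_(i < m) c i t * B t ^+ e i)
   (\sum_(i < m) (dc i * B t0 ^+ e i + c i t0 * ((e i)%:R * B t0 ^+ (e i).-1 * db))).
Proof.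
move=> hc hB; elim: m hc => [|m IH] hc.
  have -> : (fun t => \sum_(i < 0) c i t * B t ^+ e i) = cst 0.
    by apply: funext => t; rewrite big_ord0.
  rewrite big_ord0; exact: is_derive_cst.
have -> : (fun t => \sum_(i < m.+1) c i t * B t ^+ e i) =
   (fun t => \sum_(i < m) c i t * B t ^+ e i) + (c m * B ^+ e m).
  by apply: funext => t; rewrite big_ord_recr addrfctE mulrfctE exprfctE.
have IH' := IH (fun i hi => hc i (ltnW hi)).
have hcm := hc m (ltnSn m).
have H := is_deriveD IH' (is_deriveM hcm (is_deriveX (e m) hB)).
apply: (is_derive_eq H).
rewrite big_ord_recr /=.
congr (_ + _).
rewrite exprfctE /GRing.scale /=.
by rewrite addrC mulrC.
Qed.

Lemma der1_val {f : C -> C} {x df : C} : is_derive x 1 f df -> derive1 f x = df.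
Proof. by move=> [_ h]; rewrite derive1E h. Qed.

Lemma is_derive_mulc {f : C -> C} {x df : C} (k : C) : is_derive x 1 f df ->
  is_derive x 1 (fun t => f t * k) (df * k).
Proof.
move=> H.
have -> : (fun t => f t * k) = f * cst k by apply: funext => t; rewrite mulrfctE.
apply: (is_derive_eq (is_deriveM H (is_derive_cst k x 1))).
by rewrite /= scaler0 add0r; exact: mulrC.
Qed.

Lemma sum_split_db m (X Y Z : nat -> C) db :
  \sum_(i < m) (X i + Y i * (Z i * db)) =
  \sum_(i < m) X i + (\sum_(i < m) Y i * Z i) * db.
Proof.
rewrite big_split /= mulr_suml; congr (_ + _); apply: eq_bigr => i _.
by rewrite mulrA.
Qed.

Lemma is_dp_sum (m : nat) (c : nat -> C) (e : nat -> nat) (p : C) :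
  is_derive p 1 (fun t => \sum_(i < m) c i * t ^+ e i)
    (\sum_(i < m) c i * ((e i)%:R * p ^+ (e i).-1)).
Proof.
apply: (is_derive_eq (@der_sumpow m (fun i _ => c i) (fun _ => 0) e
   id 1 p (fun i _ => is_derive_cst _ _ _) (is_derive_id _ _))).
apply: eq_bigr => i _; by rewrite mul0r add0r mulr1.
Qed.

Lemma dx_sum (U : set (C * C)) m (c : nat -> C -> C -> C) (e : nat -> nat) (x y p : C) :
  (forall i, (i < m)%N -> holomorphic_on U (c i)) -> U (x, y) ->
  derive1 (fun t => \sum_(i < m) c i t y * p ^+ e i) x =
  \sum_(i < m) pdx2 (c i) x y * p ^+ e i.
Proof.
move=> hc hU; apply: der1_val.
have H := (@der_sumpow m (fun i t => c i t y)
   (fun i => pdx2 (c i) x y) e (fun _ => p) 0 x (fun i hi => @hol_dx U _ _ _ (hc i hi) hU) (is_derive_cst _ _ _)).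
apply: (is_derive_eq H).
apply: eq_bigr => i _; by rewrite !mulr0 addr0.
Qed.

Lemma dy_sum (U : set (C * C)) m (c : nat -> C -> C -> C) (e : nat -> nat) (x y p : C) :
  (forall i, (i < m)%N -> holomorphic_on U (c i)) -> U (x, y) ->
  derive1 (fun t => \sum_(i < m) c i x t * p ^+ e i) y =
  \sum_(i < m) pdy2 (c i) x y * p ^+ e i.
Proof.
move=> hc hU; apply: der1_val.
apply: (is_derive_eq (@der_sumpow m (fun i t => c i x t)
   (fun i => pdy2 (c i) x y) e (fun _ => p) 0 y (fun i hi => @hol_dy U _ _ _ (hc i hi) hU) (is_derive_cst _ _ _))).
apply: eq_bigr => i _; by rewrite !mulr0 addr0.
Qed.

Lemma dcomp_x (V : set (C * C)) (m : nat) (c : nat -> C -> C -> C) (dc : nat -> C)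
  (e : nat -> nat) (phi : C -> C -> C) (x y : C) :
  (forall i, (i < m)%N -> is_derive x 1 (fun t => c i t y) (dc i)) ->
  holomorphic_on V phi -> V (x, y) ->
  is_derive x 1 (fun t => \sum_(i < m) c i t y * phi t y ^+ e i)
   (\sum_(i < m) dc i * phi x y ^+ e i +
    (\sum_(i < m) c i x y * ((e i)%:R * phi x y ^+ (e i).-1)) * pdx2 phi x y).
Proof.
move=> hc hphi hV.
have H := (@der_sumpow m (fun i t => c i t y) dc e (fun t => phi t y)
  (pdx2 phi x y) x hc (@hol_dx V _ _ _ hphi hV)).
eapply is_derive_eq; first exact H.
exact: (sum_split_db m (fun i => dc i * phi x y ^+ e i) (fun i => c i x y)
   (fun i => (e i)%:R * phi x y ^+ (e i).-1) (pdx2 phi x y)).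
Qed.

Lemma dcomp_y (V : set (C * C)) (m : nat) (c : nat -> C -> C -> C) (dc : nat -> C)
  (e : nat -> nat) (phi : C -> C -> C) (x y : C) :
  (forall i, (i < m)%N -> is_derive y 1 (fun t => c i x t) (dc i)) ->
  holomorphic_on V phi -> V (x, y) ->
  is_derive y 1 (fun t => \sum_(i < m) c i x t * phi x t ^+ e i)
   (\sum_(i < m) dc i * phi x y ^+ e i +
    (\sum_(i < m) c i x y * ((e i)%:R * phi x y ^+ (e i).-1)) * pdy2 phi x y).
Proof.
move=> hc hphi hV.
eapply is_derive_eq; first exact (@der_sumpow m (fun i t => c i x t) dc e (fun t => phi x t)
  (pdy2 phi x y) y hc (@hol_dy V _ _ _ hphi hV)).
exact: (sum_split_db m (fun i => dc i * phi x y ^+ e i) (fun i => c i x y)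
   (fun i => (e i)%:R * phi x y ^+ (e i).-1) (pdy2 phi x y)).
Qed.

Lemma is_derive_addf {f g : C -> C} {x df dg : C} :
  is_derive x 1 f df -> is_derive x 1 g dg ->
  is_derive x 1 (fun t => f t + g t) (df + dg).
Proof.
move=> hf hg.
have -> : (fun t => f t + g t) = f + g by apply: funext => t; rewrite addrfctE.
exact: is_deriveD.
Qed.

Lemma is_derive_oppf {f : C -> C} {x df : C} :
  is_derive x 1 f df -> is_derive x 1 (fun t => - f t) (- df).
Proof.
move=> hf.
have -> : (fun t => - f t) = - f by apply: funext => t; rewrite opprfctE.
exact: is_deriveN.
Qed.

Lemma is_derive_mulf {f g : C -> C} {x df dg : C} :
  is_derive x 1 f df -> is_derive x 1 g dg ->
  is_derive x 1 (fun t => f t * g t) (df * g x + f x * dg).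
Proof.
move=> hf hg.
have -> : (fun t => f t * g t) = f * g by apply: funext => t; rewrite mulrfctE.
apply: (is_derive_eq (is_deriveM hf hg)).
rewrite addrC; congr (_ + _); exact: mulrC.
Qed.

Lemma is_derive_divf {f g : C -> C} {x df dg : C} :
  is_derive x 1 f df -> is_derive x 1 g dg -> g x != 0 ->
  is_derive x 1 (fun t => f t / g t) (df / g x - f x * dg / g x ^+ 2).
Proof.
move=> hf hg hg0.
eapply is_derive_eq; first exact: (is_derive_mulf hf (is_deriveV' hg0 hg)).
rewrite /=.
by field.
Qed.

Lemma final_alg (FP FPP FXP FYP FXPk FYPk FX FY R0 RP RX RY phx phy p0 : C) :
  FP != 0 -> 0 = FX + FP * phx -> 0 = FY + FP * phy ->
  FXPk = FXP -> FYPk = FYP ->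
  (RX + RP * phx) / FP - R0 * (FXP + FPP * phx) / FP ^+ 2 -
  (- ((RY + RP * phy) / FP - R0 * (FYP + FPP * phy) / FP ^+ 2) * p0
   + - (R0 / FP) * phy) =
  (RX + p0 * RY - ((FXPk + (1 * FY + p0 * FYPk)) / FP
      - (FX + p0 * FY) * FPP / FP ^+ 2) * R0
   - (FX + p0 * FY) / FP * RP) / FP.
Proof.
move=> hFP ix iy -> ->.
have eFX : FX = - (FP * phx) by apply/eqP; rewrite -subr_eq0 opprK -ix.
have eFY : FY = - (FP * phy) by apply/eqP; rewrite -subr_eq0 opprK -iy.
rewrite eFX eFY.
by field.
Qed.
End S.

Theorem lemma1 (R : realType) (d : nat) (hd : (3 <= d)%N)
  (U : set (CC R * CC R)) (hU : open U)
  (a : nat -> CC R -> CC R -> CC R)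
  (ha0 : forall x y, U (x, y) -> a 0%N x y = 1)
  (hahol : forall i, (i <= d)%N -> holomorphic_on U (a i))
  (hsimple : forall x y p, U (x, y) -> polyF d a x y p = 0 ->
               pdp3 (polyF d a) x y p != 0)
  (n : nat) (rc : nat -> CC R -> CC R -> CC R)
  (hrhol : forall j, (j < n)%N -> holomorphic_on U (rc j))
  (V : set (CC R * CC R)) (hV : open V) (hVU : V `<=` U)
  (phi : CC R -> CC R -> CC R) (hphi : holomorphic_on V phi)
  (hphiS : forall x y, V (x, y) -> polyF d a x y (phi x y) = 0) :
  forall x y, V (x, y) ->
    dcoef (restr phi (omegaP (polyF d a) (polyr n rc)))
          (restr phi (omegaQ (polyF d a) (polyr n rc))) x y
    = restr phi (rhs_coef (polyF d a) (polyr n rc)) x y.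
Proof.
move=> x y Vxy.
have Uxy := hVU _ Vxy.
have hai : forall i, (i < d.+1)%N -> holomorphic_on U (a i).
  by move=> i; rewrite ltnS; exact: hahol.
pose k i : CC R := ((d - i)%N)%:R.
have hFp : pdp3 (polyF d a) = fun s t p =>
    \sum_(i < d.+1) (a i s t * k i) * p ^+ (d - i).-1.
  apply: funext => s; apply: funext => t; apply: funext => p.
  rewrite /pdp3 /polyF.
  apply: etrans; first exact: (der1_val (is_dp_sum d.+1 (fun i => a i s t) (fun i => (d - i)%N) p)).
  by apply: eq_bigr => i _; rewrite mulrA.
have hFx : pdx3 (polyF d a) x y = fun p => \sum_(i < d.+1) pdx2 (a i) x y * p ^+ (d - i).
  apply: funext => p; exact: (@dx_sum _ U d.+1 a (fun i => (d - i)%N) x y p hai Uxy).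
have hFy : pdy3 (polyF d a) x y = fun p => \sum_(i < d.+1) pdy2 (a i) x y * p ^+ (d - i).
  apply: funext => p; exact: (@dy_sum _ U d.+1 a (fun i => (d - i)%N) x y p hai Uxy).
have hrx : pdx3 (polyr n rc) x y = fun p => \sum_(j < n) pdx2 (rc j) x y * p ^+ j.
  apply: funext => p; exact: (@dx_sum _ U n rc (fun j => j) x y p hrhol Uxy).
have hry : pdy3 (polyr n rc) x y = fun p => \sum_(j < n) pdy2 (rc j) x y * p ^+ j.
  apply: funext => p; exact: (@dy_sum _ U n rc (fun j => j) x y p hrhol Uxy).
have hrp : pdp3 (polyr n rc) x y = fun p => \sum_(j < n) rc j x y * (j%:R * p ^+ j.-1).
  apply: funext => p; exact: (der1_val (is_dp_sum n (fun j => rc j x y) (fun j => j) p)).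
have hF0 := hphiS x y Vxy.
have hFp0 : \sum_(i < d.+1) a i x y * k i * phi x y ^+ (d - i).-1 != 0.
  by have := hsimple x y (phi x y) Uxy hF0; rewrite hFp.
have nV : nbhs (x, y) V by apply: open_nbhs_nbhs; split.
have cx : {for x, continuous (fun t : CC R => (t, y))}.
  apply: differentiable_continuous; exact: differentiable_pair.
have cy : {for y, continuous (fun t : CC R => (x, t))}.
  apply: differentiable_continuous; exact: differentiable_pair.
have Nx : \forall t \near x, polyF d a t y (phi t y) = 0.
  have h : \forall t \near x, V (t, y) := cx V nV.
  by apply: filterS h => t /= Vt; exact: hphiS.
have Ny : \forall t \near y, polyF d a x t (phi x t) = 0.
  have h : \forall t \near y, V (x, t) := cy V nV.
  by apply: filterS h => t /= Vt; exact: hphiS.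
have Dx := @dcomp_x _ V d.+1 a (fun i => pdx2 (a i) x y) (fun i => (d-i)%N) phi x y
  (fun i hi => @hol_dx _ U _ _ _ (hai i hi) Uxy) hphi Vxy.
have Dy := @dcomp_y _ V d.+1 a (fun i => pdy2 (a i) x y) (fun i => (d-i)%N) phi x y
  (fun i hi => @hol_dy _ U _ _ _ (hai i hi) Uxy) hphi Vxy.
have Dx0 := @near_eq_is_derive _ _ _ _ (fun _ => 0) x 1 _ Nx Dx.
have Dy0 := @near_eq_is_derive _ _ _ _ (fun _ => 0) y 1 _ Ny Dy.
case: Dx0 => _; rewrite derive_cst /= => ix.
case: Dy0 => _; rewrite derive_cst /= => iy.
have eFp : \sum_(i < d.+1) a i x y * ((d - i)%:R * phi x y ^+ (d - i).-1) =
    \sum_(i < d.+1) a i x y * k i * phi x y ^+ (d - i).-1.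
  by apply: eq_bigr => i _; rewrite mulrA.
rewrite eFp in ix iy.
have HNx := @dcomp_x _ V n rc (fun j => pdx2 (rc j) x y) (fun j => j) phi x y
  (fun j hj => @hol_dx _ U _ _ _ (hrhol j hj) Uxy) hphi Vxy.
have HNy := @dcomp_y _ V n rc (fun j => pdy2 (rc j) x y) (fun j => j) phi x y
  (fun j hj => @hol_dy _ U _ _ _ (hrhol j hj) Uxy) hphi Vxy.
have HDx := @dcomp_x _ V d.+1 (fun i s t => a i s t * k i) (fun i => pdx2 (a i) x y * k i)
  (fun i => (d - i).-1) phi x y
  (fun i hi => is_derive_mulc (k i) (@hol_dx _ U _ _ _ (hai i hi) Uxy)) hphi Vxy.
have HDy := @dcomp_y _ V d.+1 (fun i s t => a i s t * k i) (fun i => pdy2 (a i) x y * k i)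
  (fun i => (d - i).-1) phi x y
  (fun i hi => is_derive_mulc (k i) (@hol_dy _ U _ _ _ (hai i hi) Uxy)) hphi Vxy.
have HQx := is_derive_divf HNx HDx hFp0.
have HPy := is_derive_mulf (is_derive_oppf (is_derive_divf HNy HDy hFp0))
  (@hol_dy _ V _ _ _ hphi Vxy).
rewrite /dcoef [pdx2 (restr _ _) _ _]/pdx2 [pdy2 (restr _ _) _ _]/pdy2.
rewrite /restr /omegaP /omegaQ /rhs_coef.
rewrite [pdp3 (KoverFp _) _ _ _]/pdp3 /KoverFp /Kfun /=.
rewrite hFx hFy hrx hry hrp hFp /=.
have HNK := is_derive_addf
  (is_dp_sum d.+1 (fun i => pdx2 (a i) x y) (fun i => (d - i)%N) (phi x y))
  (is_derive_mulf (is_derive_id (phi x y) 1)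
     (is_dp_sum d.+1 (fun i => pdy2 (a i) x y) (fun i => (d - i)%N) (phi x y))).
have HDK := is_dp_sum d.+1 (fun i => a i x y * k i) (fun i => (d - i).-1) (phi x y).
have HK := is_derive_divf HNK HDK hFp0.
rewrite (der1_val HQx) (der1_val HPy) (der1_val HK) /=.
apply: final_alg.
- exact hFp0.
- exact ix.
- exact iy.
- by apply: eq_bigr => i _; rewrite mulrA.
- by apply: eq_bigr => i _; rewrite mulrA.
Qed.
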